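(* Let $X$ be a set, $B=(B,+,0)$ a unitary magma, $(A,k,q,s,p)$ a retraction point from $X$ to $B$, and $\varphi(x,b,x',b')=q\big((k(x)+s(b))+(k(x')+s(b'))\big)$. Write $0$ also for $q(0)\in X$ and set, for $x,x'\in X$, $b,b'\in B$: $x+_{b'}x'=\varphi(x,0,x',b')$, $\xi^{x}(b,x')=\varphi(x,b,x',0)$, $\xi_{b'}(b,x')=\varphi(0,b,x',b')$, $\rho^{b}_{b'}(x)=\varphi(x,b,0,b')$, $x+x'=\varphi(x,0,x',0)$, $\xi(b,x')=\varphi(0,b,x',0)$, $\rho_{b'}(x)=\varphi(x,0,0,b')$. Consider the following conditions, each required for all $x,x'\in X$, $b,b'\in B$, $a\in A$: (kks) $k(x)+(k(x')+s(b))=(k(x)+k(x'))+s(b)$; (sks) $s(b)+(k(x)+s(b'))=(s(b)+k(x))+s(b')$; (1ks) $a+(k(x)+s(b))=(a+k(x))+s(b)$; (kss) $k(x)+(s(b)+s(b'))=(k(x)+s(b))+s(b')$; (ksk) $k(x)+(s(b)+k(x'))=(k(x)+s(b))+k(x')$; (ks1) $k(x)+(s(b)+a)=(k(x)+s(b))+a$. Then, for all $x,x'\in X$ and $b,b'\in B$: 1. if (kks) holds, then $x+_{b'}x'=\rho_{b'}(x+x')$; 2. if (sks) holds, then $\xi_{b'}(b,x')=\rho^{b}_{b'}(\xi(b,x'))$; 3. if (1ks) holds, then $\varphi(x,b,x',b')=\rho^{b}_{b'}(\xi^{x}(b,x'))$; 4. if (kss) holds, then $\rho^{b}_{b'}(x)=\rho_{b+b'}(x)$;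 5. if (ksk) holds, then $\xi^{x}(b,x')=x+_{b}\xi(b,x')$; 6. if (ks1) holds, then $\varphi(x,b,x',b')=x+_{b+b'}\xi_{b'}(b,x')$; 7. if (kks) and (ksk) hold, then $\xi^{x}(b,x')=\rho_{b}(x+\xi(b,x'))$; 8. if (sks) and (kss) hold, then $\xi_{b'}(b,x')=\rho_{b+b'}(\xi(b,x'))$; 9. if (1ks), (kss) and (ksk) hold, then $\varphi(x,b,x',b')=\rho_{b+b'}(x+\xi(b,x'))$; 10. if (ks1), (kks) and (sks) hold, then $\varphi(x,b,x',b')=\rho_{b+b'}(x+\xi(b,x'))$.
   Context: A unitary magma is a set with a binary operation $+$ and an element $0$ with $b+0=b=0+b$ for all $b$; morphisms preserve $+$ and $0$. Given a set $X$ and a unitary magma $B$, a retraction point from $X$ to $B$ is a tuple $(A,k,q,s,p)$ where $A=(A,+,0)$ is a unitary magma, $k\colon X\to A$ and $q\colon A\to X$ are maps, $s\colon B\to A$ and $p\colon A\to B$ are morphisms of unitary magmas, and $p(s(b))=b$, $q(k(x))=x$, $p(k(x))=0$, $q(s(b))=q(0)$, and $k(q(a))+s(p(a))=a$ for all $x\in X$, $b\in B$, $a\in A$. *)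

(* Defs.v *)
Set Implicit Arguments.

Record UMagma := {
  um_car :> Type;
  um_op : um_car -> um_car -> um_car;
  um_zero : um_car;
  um_op0r : forall b, um_op b um_zero = b;
  um_op0l : forall b, um_op um_zero b = b
}.

Declare Scope um_scope.
Notation "a +m b" := (um_op _ a b) (at level 50, left associativity) : um_scope.
Notation "0m" := (um_zero _) : um_scope.
Open Scope um_scope.

Definition um_morph (M N : UMagma) (f : M -> N) : Prop :=
  (forall a b, f (a +m b) = f a +m f b) /\ f 0m = 0m.

Record RetractionPoint (X : Type) (B : UMagma) := {
  rp_A : UMagma;
  rp_k : X -> rp_A;
  rp_q : rp_A -> X;
  rp_s : B -> rp_A;
  rp_p : rp_A -> B;
  rp_s_morph : @um_morph B rp_A rp_s;
  rp_p_morph : @um_morph rp_A B rp_p;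
  rp_ps : forall b, rp_p (rp_s b) = b;
  rp_qk : forall x, rp_q (rp_k x) = x;
  rp_pk : forall x, rp_p (rp_k x) = 0m;
  rp_qs : forall b, rp_q (rp_s b) = rp_q 0m;
  rp_kqsp : forall a, rp_k (rp_q a) +m rp_s (rp_p a) = a
}.

Section Ops.
Variables (X : Type) (B : UMagma) (R : RetractionPoint X B).
Local Notation A := (rp_A R).
Local Notation k := (rp_k R).
Local Notation q := (rp_q R).
Local Notation s := (rp_s R).

Definition phi (x : X) (b : B) (x' : X) (b' : B) : X :=
  q ((k x +m s b) +m (k x' +m s b')).

Definition zX : X := q 0m.

Definition plus_b (b' : B) (x x' : X) : X := phi x 0m x' b'.
Definition xi_up (x : X) (b : B) (x' : X) : X := phi x b x' 0m.
Definition xi_down (b' : B) (b : B) (x' : X) : X := phi zX b x' b'.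
Definition rho_ud (b b' : B) (x : X) : X := phi x b zX b'.
Definition plusX (x x' : X) : X := phi x 0m x' 0m.
Definition xi (b : B) (x' : X) : X := phi zX b x' 0m.
Definition rho (b' : B) (x : X) : X := phi x 0m zX b'.

Definition cond_kks : Prop := forall (x x' : X) (b : B),
  k x +m (k x' +m s b) = (k x +m k x') +m s b.
Definition cond_sks : Prop := forall (x : X) (b b' : B),
  s b +m (k x +m s b') = (s b +m k x) +m s b'.
Definition cond_1ks : Prop := forall (a : A) (x : X) (b : B),
  a +m (k x +m s b) = (a +m k x) +m s b.
Definition cond_kss : Prop := forall (x : X) (b b' : B),
  k x +m (s b +m s b') = (k x +m s b) +m s b'.
Definition cond_ksk : Prop := forall (x x' : X) (b : B),
  k x +m (s b +m k x') = (k x +m s b) +m k x'.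
Definition cond_ks1 : Prop := forall (x : X) (b : B) (a : A),
  k x +m (s b +m a) = (k x +m s b) +m a.
End Ops.

(* Main.v *)
Require Import Defs.

Section H.
Variables (X : Type) (B : UMagma) (R : RetractionPoint X B).
Local Notation k := (rp_k R).
Local Notation q := (rp_q R).
Local Notation s := (rp_s R).
Local Notation p := (rp_p R).

Lemma sD a b : s (a +m b) = s a +m s b.
Proof. exact (proj1 (rp_s_morph R) a b). Qed.
Lemma s0 : s 0m = 0m.
Proof. exact (proj2 (rp_s_morph R)). Qed.
Lemma pD a b : p (a +m b) = p a +m p b.
Proof. exact (proj1 (rp_p_morph R) a b). Qed.
Lemma p0 : p 0m = 0m.
Proof. exact (proj2 (rp_p_morph R)). Qed.
Lemma kz : k (zX R) = 0m.
Proof.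
  unfold zX. pose proof (rp_kqsp R 0m) as H. rewrite p0, s0, um_op0r in H. exact H.
Qed.
Lemma kq a b : p a = b -> k (q a) +m s b = a.
Proof. intros <-. apply rp_kqsp. Qed.
Lemma kq0 a : p a = 0m -> k (q a) = a.
Proof. intros H. pose proof (@kq a 0m H) as E. rewrite s0, um_op0r in E. exact E. Qed.
End H.

Ltac pcomp R := rewrite ?pD, ?(rp_pk R), ?(rp_ps R), ?um_op0l, ?um_op0r; reflexivity.

Theorem proposition6p1 (X : Type) (B : UMagma) (R : RetractionPoint X B) :
  forall (x x' : X) (b b' : B),
  (cond_kks R -> plus_b R b' x x' = rho R b' (plusX R x x')) /\
  (cond_sks R -> xi_down R b' b x' = rho_ud R b b' (xi R b x')) /\
  (cond_1ks R -> phi R x b x' b' = rho_ud R b b' (xi_up R x b x')) /\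
  (cond_kss R -> rho_ud R b b' x = rho R (b +m b') x) /\
  (cond_ksk R -> xi_up R x b x' = plus_b R b x (xi R b x')) /\
  (cond_ks1 R -> phi R x b x' b' = plus_b R (b +m b') x (xi_down R b' b x')) /\
  (cond_kks R -> cond_ksk R -> xi_up R x b x' = rho R b (plusX R x (xi R b x'))) /\
  (cond_sks R -> cond_kss R -> xi_down R b' b x' = rho R (b +m b') (xi R b x')) /\
  (cond_1ks R -> cond_kss R -> cond_ksk R ->
     phi R x b x' b' = rho R (b +m b') (plusX R x (xi R b x'))) /\
  (cond_ks1 R -> cond_kks R -> cond_sks R ->
     phi R x b x' b' = rho R (b +m b') (plusX R x (xi R b x'))).
Proof.
  intros x x' b b'.
  unfold plus_b, xi_up, xi_down, rho_ud, plusX, xi, rho, phi, cond_kks, cond_sks,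
    cond_1ks, cond_kss, cond_ksk, cond_ks1.
  assert (Hk := @kz _ _ R). assert (Hs := @s0 _ _ R). assert (HsD := @sD _ _ R).
  set (k := rp_k R) in *. set (q := rp_q R) in *. set (s := rp_s R) in *.
  assert (Ey : forall x0 b0, k (q (s b0 +m k x0)) +m s b0 = s b0 +m k x0)
    by (intros; apply kq; pcomp R).
  rewrite ?Hk, ?Hs, ?um_op0l, ?um_op0r.
  assert (D1 : forall (H : forall (a : rp_A R) (x0 : X) (b0 : B),
              a +m (k x0 +m s b0) = (a +m k x0) +m s b0) x0 x1 b0,
              k x0 +m (k x1 +m s b0) = (k x0 +m k x1) +m s b0)
    by (intros H x0 x1 b0; apply H).
  assert (D2 : forall (H : forall (x0 : X) (b0 : B) (a : rp_A R),
              k x0 +m (s b0 +m a) = (k x0 +m s b0) +m a) x0 b0 b1,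
              k x0 +m (s b0 +m s b1) = (k x0 +m s b0) +m s b1)
    by (intros H x0 b0 b1; apply H).
  assert (Kp : forall x0 x1, k (q (k x0 +m k x1)) = k x0 +m k x1)
    by (intros; apply kq0; pcomp R).
  assert (Kx : forall x0 b0 x1, k (q ((k x0 +m s b0) +m k x1)) +m s b0 = (k x0 +m s b0) +m k x1)
    by (intros; apply kq; pcomp R).
  assert (Kd : forall b0 x1 b1, k (q (s b0 +m (k x1 +m s b1))) +m s (b0 +m b1)
                = s b0 +m (k x1 +m s b1))
    by (intros; apply kq; pcomp R).
  split; [|split; [|split; [|split; [|split; [|split; [|split; [|split; [|split]]]]]]]].
  - intros H. rewrite Kp. f_equal. apply H.
  - intros H. rewrite Ey. f_equal. apply H.
  - intros H. rewrite Kx. f_equal. apply H.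
  - intros H. rewrite HsD. f_equal. symmetry. apply H.
  - intros H. rewrite Ey. f_equal. symmetry. apply H.
  - intros H. rewrite Kd. f_equal. symmetry. apply H.
  - intros H1 H2. rewrite Kp, <- H1, Ey. f_equal. symmetry. apply H2.
  - intros H1 H2. rewrite HsD, H2, Ey. f_equal. apply H1.
  - intros H1 H2 H3. rewrite Kp, HsD.
    rewrite <- (Kp x (q (s b +m k x'))), H2, Kp, <- (H1 (k x)), Ey, H3, <- H1. reflexivity.
  - intros H1 H2 H3. rewrite Kp, <- H2, HsD, (D2 H1), Ey, <- H3, H1. reflexivity.
Qed.
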